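(* Let $m'\ge 2$ be an integer and $p\in(0,1/2)$ a constant. There exists an integer $M_{p,m'}$, depending only on $p$ and $m'$, such that for every integer $n'>M_{p,m'}$, $$\sum_{\substack{\ell\ge\mu\ge m'\\ \ell+\mu\le n'}}\binom{n'}{\ell+\mu}\binom{\ell+\mu}{\ell}\left(\frac{p}{1-p}\right)^{\ell\mu}\le 2\binom{n'}{m'}\left(1+\left(\frac{p}{1-p}\right)^{m'}\right)^{n'},$$ where the sum is over integers $\ell,\mu$. Moreover, if $p<0.01$, this inequality holds for all integers $m'\ge 2$ and $n'\ge 2m'$. *)

(* Defs.v *)
From HB Require Import structures.
From mathcomp Require Import all_boot all_order all_algebra.
From mathcomp Require Import reals.
Set Implicit Arguments. Unset Strict Implicit. Unset Printing Implicit Defensive.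
Import Order.TTheory GRing.Theory Num.Theory.
Local Open Scope ring_scope.

(* Both l and mu are necessarily <= n, so ranging over 'I_(n+1) is exhaustive. *)
Definition lhs_sum (R : realType) (p : R) (m n : nat) : R :=
  \sum_(l < n.+1) \sum_(mu < n.+1 | ((m <= mu)%N && (mu <= l)%N && (l + mu <= n)%N))
     ('C(n, l + mu) * 'C(l + mu, l))%:R * (p / (1 - p)) ^+ (l * mu).

Definition rhs_bound (R : realType) (p : R) (m n : nat) : R :=
  2 * ('C(n, m))%:R * (1 + (p / (1 - p)) ^+ m) ^+ n.

(* Main.v *)
Require Import Defs.
From HB Require Import structures.
From mathcomp Require Import all_boot all_order all_algebra.
From mathcomp Require Import reals.
From mathcomp Require Import zify ring lra.
Import Order.TTheory GRing.Theory Num.Theory.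

Lemma expn_mono a b e : a <= b -> a ^ e <= b ^ e.
Proof. by move=> h; case: e => [//|e]; rewrite leq_exp2r. Qed.

Lemma ffact_le_exp n k : n ^_ k <= n ^ k.
Proof.
elim: k n => [|k IH] n; first by rewrite ffactn0 expn0.
rewrite ffactnS expnS leq_mul2l; case: n => [//|n] /=.
apply: leq_trans (IH n) _; apply: expn_mono; lia.
Qed.

Lemma ffact_ge_exp m j : m.+1 ^ j <= (m + j) ^_ j.
Proof.
elim: j => [|j IH]; first by rewrite ffactn0 expn0.
rewrite addnS ffactSS expnS; apply: leq_mul => //; lia.
Qed.

Lemma bin_le_exp n s : 'C(n, s) <= n ^ s.
Proof.
apply: leq_trans (ffact_le_exp n s); rewrite -bin_ffact leq_pmulr //.
exact: fact_gt0.
Qed.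

Lemma bin_le_2exp s l : 'C(s, l) <= 2 ^ s.
Proof.
case: (leqP l s) => hl; last by rewrite bin_small.
have := expnDn 1 1 s; rewrite addn1 => ->.
rewrite (bigD1 (Ordinal (hl : l < s.+1))) //= !exp1n !muln1 leq_addr //.
Qed.

Lemma bin_id n m l mu : m <= mu -> mu <= l -> l + mu <= n ->
  'C(n, l + mu) * 'C(l + mu, l) * 'C(mu, m) =
  'C(n, m) * 'C(n - m, l + (mu - m)) * 'C(l + (mu - m), mu - m).
Proof.
move=> h1 h2 h3.
have H : forall x y, x * (l`! * (mu - m)`! * m`! * (n - (l+mu))`!) =
                     y * (l`! * (mu - m)`! * m`! * (n - (l+mu))`!) -> x = y.
  move=> x y /eqP; rewrite eqn_pmul2r ?muln_gt0 ?fact_gt0 //; by move/eqP.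
apply: H.
have e1 : 'C(n, l + mu) * (( l + mu)`! * (n - (l + mu))`!) = n`! by apply: bin_fact.
have e2 : 'C(l + mu, l) * (l`! * (l + mu - l)`!) = (l + mu)`! by apply: bin_fact; lia.
have e3 : 'C(mu, m) * (m`! * (mu - m)`!) = mu`! by apply: bin_fact.
have e4 : 'C(n, m) * (m`! * (n - m)`!) = n`! by apply: bin_fact; lia.
have e5 : 'C(n - m, l + (mu - m)) * ((l + (mu - m))`! * (n - m - (l + (mu - m)))`!) = (n - m)`!
  by apply: bin_fact; lia.
have e6 : 'C(l + (mu - m), mu - m) * ((mu - m)`! * (l + (mu - m) - (mu - m))`!) = (l + (mu - m))`!
  by apply: bin_fact; lia.
have f1 : l + mu - l = mu by lia.
have f2 : n - m - (l + (mu - m)) = n - (l + mu) by lia.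
have f3 : l + (mu - m) - (mu - m) = l by lia.
rewrite f1 in e2; rewrite f2 in e5; rewrite f3 in e6.
transitivity n`!.
  rewrite -e1 -e2 -e3; ring.
rewrite -e4 -e5 -e6; ring.
Qed.

Local Open Scope ring_scope.

Lemma binom_term (R : numDomainType) (x : R) n i : 0 <= x ->
  x ^+ i *+ 'C(n, i) <= (x + 1) ^+ n.
Proof.
move=> x0; case: (leqP i n) => hi; last by rewrite bin_small // mulr0n exprn_ge0 // addr_ge0.
rewrite exprD1n (bigD1 (Ordinal (hi : (i < n.+1)%N))) //=.
apply: ler_wpDr => //.
by apply: sumr_ge0 => k _; rewrite mulrn_wge0 // exprn_ge0.
Qed.

Lemma sum_prefix_le (R : numDomainType) (g : nat -> R) N X :
  (forall k, 0 <= g k) -> (forall k, (N < k)%N -> g k = 0) ->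
  \sum_(k < X) g k <= \sum_(k < N.+1) g k.
Proof.
move=> g0 gz; rewrite -!(big_mkord xpredT).
case: (leqP X N.+1) => h.
  rewrite [X in _ <= X](big_cat_nat (n := X)) //=.
  by apply: ler_wpDr => //; exact: sumr_ge0.
rewrite [X in X <= _](big_cat_nat (n := N.+1)) //=; last exact: ltnW.
have -> : \sum_(N.+1 <= i < X) g i = 0.
  by rewrite big_nat_cond big1 // => k /andP[/andP[hk _] _]; apply: gz.
by rewrite addr0.
Qed.

Lemma shift_le (R : numDomainType) (g : nat -> R) N A j :
  (forall k, 0 <= g k) -> (forall k, (N < k)%N -> g k = 0) ->
  \sum_(l < A) g (l + j)%N <= \sum_(k < N.+1) g k.
Proof.
move=> g0 gz; apply: le_trans (@sum_prefix_le _ g N (A + j)%N g0 gz).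
rewrite -(big_mkord xpredT (fun l => g (l + j)%N)) -(big_mkord xpredT g).
have -> : \sum_(0 <= l < A) g (l + j)%N = \sum_(0 + j <= k < A + j) g k.
  by rewrite big_addn addnK.
rewrite [X in _ <= X](big_cat_nat (n := j) (m := 0%N)) //= ?leq_addl //.
by apply: ler_wpDl => //; exact: sumr_ge0.
Qed.

Lemma geom_le (R : realFieldType) m n :
  \sum_(mu < n) (if (m <= mu)%N then (2^-1 : R) ^+ (mu - m) else 0) <= 2.
Proof.
suff : \sum_(mu < n) (if (m <= mu)%N then (2^-1 : R) ^+ (mu - m) else 0)
       + 2 * (2^-1) ^+ (n - m) <= 2.
  move=> h; apply: le_trans h; apply: ler_wpDr => //.
  by apply: mulr_ge0 => //; apply: exprn_ge0; rewrite invr_ge0.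
elim: n => [|n IH]; first by rewrite big_ord0 sub0n expr0 add0r mulr1.
rewrite big_ord_recr /=.
case: (leqP m n) => h.
  have -> : (n.+1 - m = (n - m).+1)%N by lia.
  rewrite exprS; move: IH.
  set y := (2^-1 : R) ^+ (n - m). have y0 : 0 <= y by rewrite exprn_ge0 // invr_ge0.
  set S := \sum_(_ < n) _.
  lra.
have -> : (n.+1 - m = 0)%N by lia.
have e : (n - m = 0)%N by lia.
by rewrite e in IH; rewrite addr0.
Qed.


Lemma term_bound (R : realFieldType) (q : R) m n l mu :
  0 <= q -> (m <= mu)%N -> (mu <= l)%N -> (l + mu <= n)%N ->
  (mu = m \/ 2 * (m + 2 * (l - m))%:R * q ^+ (l - m) <= (m.+1)%:R) ->
  ('C(n, l + mu) * 'C(l + mu, l))%:R * q ^+ (l * mu) <=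
  ('C(n, m) * 'C(n - m, l + (mu - m)))%:R * (q ^+ m) ^+ (l + (mu - m))
     * (2^-1) ^+ (mu - m).
Proof.
move=> q0 h1 h2 h3 hG.
have Ec := bin_id n m l mu h1 h2 h3.
set j := (mu - m)%N in Ec hG *; set t := (l - m)%N in hG *.
set k := (l + j)%N in Ec *.
set c := ('C(n, l + mu) * 'C(l + mu, l))%N in Ec *.
set D := ('C(n, m) * 'C(n - m, k))%N in Ec *.
have Hexp : (l * mu = m * k + t * j)%N.
  rewrite /k /t /j; have el : l = (m + (l - m))%N by lia.
  have emu : mu = (m + (mu - m))%N by lia.
  set t' := (l - m)%N in el *; set j' := (mu - m)%N in emu *.
  rewrite el emu; rewrite -el -emu. nia.
rewrite Hexp exprD !exprM.
set A := (q ^+ m) ^+ k; set B := (q ^+ t) ^+ j.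
have A0 : 0 <= A by rewrite exprn_ge0 // exprn_ge0.
have B0 : 0 <= B by rewrite exprn_ge0 // exprn_ge0.
set cm := 'C(mu, m) in Ec; set ckj := 'C(k, j) in Ec.
have cm0 : (0 < cm)%N by rewrite bin_gt0.
have h2inv : (0 : R) <= 2^-1 by rewrite invr_ge0.
suff key : ckj%:R * B <= cm%:R * (2^-1) ^+ j.
  rewrite -(@ler_pM2l _ (cm%:R)) ?ltr0n //.
  have ER : (c%:R * cm%:R = D%:R * ckj%:R :> R) by rewrite -!natrM Ec.
  have -> : cm%:R * (c%:R * (A * B)) = (c%:R * cm%:R) * (A * B) :> R by ring.
  rewrite ER.
  have -> : D%:R * ckj%:R * (A * B) = (D%:R * A) * (ckj%:R * B) :> R by ring.
  have -> : cm%:R * (D%:R * A * 2^-1 ^+ j) = (D%:R * A) * (cm%:R * 2^-1 ^+ j) :> R by ring.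
  by apply: ler_wpM2l => //; apply: mulr_ge0.
have jf : (0 : R) < (j`! * 2 ^ j)%:R by rewrite ltr0n muln_gt0 fact_gt0 expn_gt0.
rewrite -(@ler_pM2r _ ((j`! * 2 ^ j)%:R)) //.
have -> : cm%:R * 2^-1 ^+ j * (j`! * 2 ^ j)%:R = (cm * j`!)%:R :> R.
  rewrite natrM natrX -mulrA [X in _ * X = _]mulrA [X in _ * (X * _)]mulrC.
  rewrite -mulrA -exprMn mulVf ?pnatr_eq0 // expr1n mulr1 natrM //.
have -> : ckj%:R * B * (j`! * 2 ^ j)%:R = (ckj * j`!)%:R * (2 * q ^+ t) ^+ j :> R.
  rewrite /B natrM natrX exprMn; ring.
rewrite /ckj /cm bin_ffact.
have emu : mu = (m + j)%N by rewrite /j; lia.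
rewrite emu.
have -> : 'C(m + j, m) = 'C(m + j, j).
  by rewrite -[in RHS](bin_sub (leq_addl m j)) addnK.
rewrite bin_ffact.
apply: le_trans (_ : (k ^ j)%:R * (2 * q ^+ t) ^+ j <= _).
  apply: ler_wpM2r; first by rewrite exprn_ge0 // mulr_ge0 // exprn_ge0.
  by rewrite ler_nat ffact_le_exp.
apply: le_trans (_ : ((m.+1) ^ j)%:R <= _); last by rewrite ler_nat ffact_ge_exp.
rewrite !natrX -exprMn.
case: hG => [hm | hG].
  have -> : j = 0%N by rewrite /j hm subnn.
  by rewrite !expr0.
apply: lerXn2r.
- by rewrite nnegrE mulr_ge0 // mulr_ge0 // exprn_ge0.
- by rewrite nnegrE.
apply: le_trans hG.
have hk : (k <= m + 2 * t)%N by rewrite /k /t /j; lia.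
have -> : k%:R * (2 * q ^+ t) = 2 * k%:R * q ^+ t by ring.
apply: ler_wpM2r; first by rewrite exprn_ge0.
by apply: ler_wpM2l => //; rewrite ler_nat.
Qed.


Lemma sum_good (R : realFieldType) (a : R) m n : 0 <= a ->
  \sum_(l < n.+1) \sum_(mu < n.+1 | (m <= mu)%N)
     ('C(n, m) * 'C(n - m, l + (mu - m)))%:R * a ^+ (l + (mu - m)) * (2^-1) ^+ (mu - m)
   <= 2 * ('C(n, m))%:R * (1 + a) ^+ (n - m).
Proof.
move=> a0.
set g := fun k : nat => ('C(n - m, k))%:R * a ^+ k.
have g0 : forall k, 0 <= g k by move=> k; rewrite /g mulr_ge0 // exprn_ge0.
have gz : forall k, (n - m < k)%N -> g k = 0 by move=> k hk; rewrite /g bin_small // mul0r.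
have gs : \sum_(k < (n - m).+1) g k = (1 + a) ^+ (n - m).
  by rewrite addrC exprD1n; apply: eq_bigr => i _; rewrite /g mulr_natl.
rewrite exchange_big /=.
have h2 : (0 : R) <= 2^-1 by rewrite invr_ge0.
apply: le_trans (_ : \sum_(mu < n.+1 | (m <= mu)%N)
     ('C(n, m))%:R * (2^-1) ^+ (mu - m) * (1 + a) ^+ (n - m) <= _).
  apply: ler_sum => mu _.
  have -> : \sum_(l < n.+1) ('C(n, m) * 'C(n - m, l + (mu - m)))%:R * a ^+ (l + (mu - m)) * (2^-1) ^+ (mu - m)
     = ('C(n, m))%:R * (2^-1) ^+ (mu - m) * \sum_(l < n.+1) g (l + (mu - m))%N.
    rewrite mulr_sumr; apply: eq_bigr => l _; rewrite /g natrM; ring.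
  apply: ler_wpM2l; first by rewrite mulr_ge0 // exprn_ge0.
  by rewrite -gs; apply: shift_le.
rewrite -mulr_suml.
have -> : \sum_(mu < n.+1 | (m <= mu)%N) ('C(n, m))%:R * (2^-1 : R) ^+ (mu - m)
   = ('C(n, m))%:R * \sum_(mu < n.+1) (if (m <= mu)%N then (2^-1 : R) ^+ (mu - m) else 0).
  rewrite mulr_sumr big_mkcond; apply: eq_bigr => i _; case: ifP => //; by rewrite mulr0.
have := geom_le R m n.+1.
set S := \sum_(_ < _) _ => hS.
have c0 : (0 : R) <= ('C(n, m))%:R by [].
have e0 : (0 : R) <= (1 + a) ^+ (n - m) by rewrite exprn_ge0 // addr_ge0.
have -> : 2 * ('C(n, m))%:R * (1 + a) ^+ (n - m) = (('C(n, m))%:R * (1 + a) ^+ (n - m)) * 2 by ring.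
have -> : ('C(n, m))%:R * S * (1 + a) ^+ (n - m) = (('C(n, m))%:R * (1 + a) ^+ (n - m)) * S by ring.
by apply: ler_wpM2l => //; apply: mulr_ge0.
Qed.


Lemma pow_le_self (R : realFieldType) (x : R) t : 0 <= x -> x <= 1 -> (1 <= t)%N -> x ^+ t <= x.
Proof.
move=> x0 x1; case: t => [//|t] _; rewrite exprS.
have : x ^+ t <= 1 by rewrite exprn_ile1.
move=> h; rewrite -[X in _ <= X]mulr1; apply: ler_wpM2l => //.
Qed.

Lemma G_small (R : realFieldType) (q : R) m t : 0 <= q -> q <= 8^-1 -> (1 <= t)%N ->
  2 * (m + 2 * t)%:R * q ^+ t <= (m.+1)%:R.
Proof.
move=> q0 q8 t1.
have hX : q ^+ t <= q by apply: pow_le_self => //; lra.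
have hY : t%:R * q ^+ t <= 2 * q.
  apply: le_trans (_ : (2 * q) ^+ t <= _); last by apply: pow_le_self => //; lra.
  rewrite exprMn; apply: ler_wpM2r; first by rewrite exprn_ge0.
  by rewrite -natrX ler_nat ltnW // ltn_expl.
have m0 : (0 : R) <= m%:R by [].
have hZ : m%:R * q ^+ t <= m%:R * 8^-1.
  by apply: ler_wpM2l => //; apply: le_trans hX q8.
have -> : 2 * (m + 2 * t)%:R * q ^+ t = 2 * (m%:R * q ^+ t) + 4 * (t%:R * q ^+ t).
  rewrite natrD natrM; ring.
rewrite -addn1 natrD.
lra.
Qed.

Lemma filter_le (R : realFieldType) (I : finType) (P Q : pred I) (f : I -> R) :
  (forall i, 0 <= f i) -> (forall i, P i -> Q i) ->
  \sum_(i | P i) f i <= \sum_(i | Q i) f i.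
Proof.
move=> f0 PQ; rewrite [X in X <= _]big_mkcond [X in _ <= X]big_mkcond /=.
apply: ler_sum => i _; case: ifP => hP; first by rewrite (PQ _ hP).
by case: ifP.
Qed.

Lemma q_facts (R : realFieldType) (p : R) : 0 < p -> p < 2^-1 ->
  0 < p / (1 - p) /\ p / (1 - p) < 1.
Proof.
move=> p0 p2; have h : 0 < 1 - p by lra.
split; first by rewrite divr_gt0.
by rewrite ltr_pdivrMr // mul1r; lra.
Qed.

Lemma q_small (R : realFieldType) (p : R) : 0 < p -> p < 100^-1 -> p / (1 - p) <= 8^-1.
Proof.
move=> p0 p2; have h : 0 < 1 - p by lra.
by rewrite ler_pdivrMr //; lra.
Qed.

Lemma part2 (R : realType) (m : nat) (p : R) : (2 <= m)%N -> 0 < p -> p < 100^-1 ->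
  forall n : nat, (2 * m <= n)%N -> lhs_sum p m n <= rhs_bound p m n.
Proof.
move=> m2 p0 p1 n hn.
have [q0 q1] : 0 < p / (1 - p) /\ p / (1 - p) < 1 by apply: q_facts => //; lra.
have q8 : p / (1 - p) <= 8^-1 by apply: q_small.
rewrite /lhs_sum /rhs_bound; set q := p / (1 - p) in q0 q1 q8 *.
have a0 : 0 <= q ^+ m by rewrite exprn_ge0 // ltW.
apply: le_trans (_ : \sum_(l < n.+1) \sum_(mu < n.+1 | (m <= mu)%N)
     ('C(n, m) * 'C(n - m, l + (mu - m)))%:R * (q ^+ m) ^+ (l + (mu - m)) * (2^-1) ^+ (mu - m) <= _).
  apply: ler_sum => l _.
  apply: le_trans (_ : \sum_(mu < n.+1 | ((m <= mu)%N && (mu <= l)%N && (l + mu <= n)%N))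
     ('C(n, m) * 'C(n - m, l + (mu - m)))%:R * (q ^+ m) ^+ (l + (mu - m)) * (2^-1) ^+ (mu - m) <= _).
    apply: ler_sum => mu /andP[/andP[h1 h2] h3].
    apply: (@term_bound _ q m n l mu) => //; first exact: ltW.
    case: (eqVneq (nat_of_ord mu) m) => [->|hne]; [by left | right].
    apply: G_small => //; first exact: ltW.
    by move: hne; lia.
  apply: filter_le.
    move=> mu; apply: mulr_ge0; last by rewrite exprn_ge0 // invr_ge0.
    by apply: mulr_ge0 => //; rewrite exprn_ge0.
  by move=> mu /andP[/andP[]].
apply: le_trans (@sum_good _ (q ^+ m) m n a0) _.
have c0 : (0 : R) <= 2 * ('C(n, m))%:R by rewrite mulr_ge0.
apply: ler_wpM2l => //; apply: ler_weXn2l; last exact: leq_subr.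
by rewrite lerDl.
Qed.


Lemma bernoulli_weak (R : realFieldType) (a : R) K : 0 <= a -> K%:R * a <= (1 + a) ^+ K.
Proof.
move=> a0; have := @binom_term _ a K 1 a0; rewrite bin1 expr1 addrC.
by rewrite mulr_natl.
Qed.

Lemma polyexp (R : realType) (a c : R) E m : 0 < a -> 0 <= c ->
  exists M : nat, forall n, (M < n)%N -> c * ((n.+1) ^ E)%:R <= a * (1 + a) ^+ (n - m).
Proof.
move=> a0 c0.
set d := E.+1. set B := (2 * d + m)%N.
set X := c * (B ^ E)%:R / a ^+ d.+1.
have ad : 0 < a ^+ d.+1 by rewrite exprn_gt0.
have X0 : 0 <= X by apply: divr_ge0; [apply: mulr_ge0 => // | exact: ltW].
set K0 := (Num.Def.archi_bound X).+1.
have hX : X < K0%:R.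
  apply: lt_le_trans (archi_boundP X0) _; by rewrite ler_nat /K0.
exists (m + d * K0)%N => n hn.
set N := (n - m)%N. set K := (N %/ d)%N.
have d0 : (0 < d)%N by [].
have hK0 : (K0 <= K)%N by rewrite /K leq_divRL //; rewrite /N; lia.
have hK1 : (1 <= K)%N by apply: leq_trans hK0; rewrite /K0.
have hKd : (K * d <= N)%N by apply: leq_trunc_div.
have hN : (N < K.+1 * d)%N by apply: ltn_ceil.
have hn1 : (n.+1 <= B * K)%N.
  have en : n = (N + m)%N by rewrite /N; lia.
  rewrite /B; nia.
have Kr0 : (0 : R) <= K%:R by [].
have low : a ^+ d.+1 * K%:R ^+ d <= a * (1 + a) ^+ N.
  rewrite exprS -mulrA; apply: ler_wpM2l; first exact: ltW.
  apply: le_trans (_ : (1 + a) ^+ (K * d) <= _); last first.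
    by apply: ler_weXn2l => //; rewrite lerDl ltW.
  rewrite exprM -exprMn; apply: lerXn2r.
  - by rewrite nnegrE mulr_ge0 // ltW.
  - by rewrite nnegrE exprn_ge0 // addr_ge0 // ltW.
  by rewrite mulrC; apply: bernoulli_weak; apply: ltW.
apply: le_trans low.
apply: le_trans (_ : c * ((B ^ E)%:R * K%:R ^+ E) <= _).
  apply: ler_wpM2l => //; rewrite -natrX -natrM ler_nat -expnMn.
  by apply: expn_mono.
have hcB : c * (B ^ E)%:R <= a ^+ d.+1 * K%:R.
  rewrite -ler_pdivrMl // mulrC.
  apply: ltW; apply: lt_le_trans hX _; by rewrite ler_nat.
rewrite /d [K%:R ^+ E.+1]exprS !mulrA.
by apply: ler_wpM2r => //; rewrite exprn_ge0.
Qed.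


Lemma T0_exists (R : realType) (q : R) m : 0 < q -> q < 1 ->
  exists T0 : nat, forall t, (T0 <= t)%N -> 2 * (m + 2 * t)%:R * q ^+ t <= (m.+1)%:R.
Proof.
move=> q0 q1.
set b := q^-1 - 1.
have b0 : 0 < b by rewrite /b subr_gt0 invf_gt1.
have [M HM] := @polyexp R b (2 * (m + 2)%:R * b) 1 0 b0
   (mulr_ge0 (mulr_ge0 (ler0n _ 2) (ler0n _ _)) (ltW b0)).
exists M.+1 => t ht.
have := HM t ht; rewrite subn0 expn1 => h.
have h2 : 2 * (m + 2)%:R * t.+1%:R <= (1 + b) ^+ t.
  rewrite -(@ler_pM2l _ b) //.
  have -> : b * (2 * (m + 2)%:R * t.+1%:R) = 2 * (m + 2)%:R * b * t.+1%:R by ring.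
  exact: h.
have e1 : (1 + b) * q = 1 by rewrite /b addrC subrK mulVf // gt_eqF.
have h3 : (2 : R) * (m + 2 * t)%:R <= 2 * (m + 2)%:R * t.+1%:R.
  have -> : 2 * (m + 2)%:R * t.+1%:R = 2 * ((m + 2) * t.+1)%:R :> R by rewrite natrM mulrA.
  rewrite ler_pM2l // ler_nat; nia.
apply: le_trans (_ : (1 + b) ^+ t * q ^+ t <= _).
  apply: ler_wpM2r; [by rewrite exprn_ge0 // ltW | exact: le_trans h2].
by rewrite -exprMn e1 expr1n ler1n.
Qed.

Lemma bad_bound n L l mu : (l < L)%N -> (mu <= l)%N ->
  ('C(n, l + mu) * 'C(l + mu, l) <= (2 * n.+1) ^ (2 * L))%N.
Proof.
move=> hl hm.
apply: leq_trans (_ : (n.+1 ^ (l + mu) * 2 ^ (l + mu) <= _)%N).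
  apply: leq_mul; last exact: bin_le_2exp.
  apply: leq_trans (bin_le_exp _ _) _; apply: expn_mono; lia.
rewrite -expnMn mulnC; apply: leq_pexp2l => //; lia.
Qed.

Lemma count_bound (R : numDomainType) n L :
  \sum_(l < n.+1) \sum_(mu < n.+1) (((2 * n.+1) ^ (2 * L))%:R : R)
  = (2 ^ (2 * L))%:R * ((n.+1) ^ (2 * L + 2))%:R.
Proof.
have e : ((2 * n.+1) ^ (2 * L) * (n.+1 * n.+1) = 2 ^ (2 * L) * n.+1 ^ (2 * L + 2))%N.
  rewrite expnMn expnD.
  rewrite (_ : (n.+1 ^ 2 = n.+1 * n.+1)%N); last by rewrite expnS expn1.
  by rewrite -mulnA.
rewrite sumr_const card_ord sumr_const card_ord -mulrnA -natrM -e natrM mulr_natr.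
by [].
Qed.


Lemma part1 (R : realType) (m : nat) (p : R) : (2 <= m)%N -> 0 < p -> p < 2^-1 ->
  exists M : nat, forall n : nat, (M < n)%N -> lhs_sum p m n <= rhs_bound p m n.
Proof.
move=> m2 p0 p1.
have [q0 q1] : 0 < p / (1 - p) /\ p / (1 - p) < 1 by apply: q_facts.
rewrite /lhs_sum /rhs_bound; set q := p / (1 - p) in q0 q1 *.
set a := q ^+ m.
have a0 : 0 < a by rewrite exprn_gt0.
have [T0 HT0] := @T0_exists R q m q0 q1.
set L := (m + T0)%N.
set E := (2 * L + 2)%N.
set c : R := (2 ^ (2 * L))%:R.
have [M1 HM1] := @polyexp R a c E m a0 (ler0n _ _).
exists (maxn M1 m) => n hn.
have hnM1 : (M1 < n)%N by move: hn; rewrite gtn_max => /andP[].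
have hnm : (m < n)%N by move: hn; rewrite gtn_max => /andP[].
set Bd := fun (l mu : nat) =>
  ('C(n, m) * 'C(n - m, l + (mu - m)))%:R * a ^+ (l + (mu - m)) * (2^-1 : R) ^+ (mu - m).
set bad := fun (l mu : nat) =>
  if (l < L)%N then (('C(n, l + mu) * 'C(l + mu, l))%:R : R) else 0.
have Bd0 : forall l mu, 0 <= Bd l mu.
  move=> l mu; apply: mulr_ge0; last by rewrite exprn_ge0 // invr_ge0.
  by apply: mulr_ge0 => //; rewrite exprn_ge0 // ltW.
set C := ('C(n, m))%:R : R.
set N := (n - m)%N.
have step1 : \sum_(l < n.+1) \sum_(mu < n.+1 | (m <= mu)%N && (mu <= l)%N && (l + mu <= n)%N)
     ('C(n, l + mu) * 'C(l + mu, l))%:R * q ^+ (l * mu)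
   <= \sum_(l < n.+1) \sum_(mu < n.+1 | (m <= mu)%N) Bd l mu
      + \sum_(l < n.+1) \sum_(mu < n.+1 | (m <= mu)%N && (mu <= l)%N && (l + mu <= n)%N) bad l mu.
  rewrite -big_split /=; apply: ler_sum => l _.
  apply: le_trans (_ : \sum_(mu < n.+1 | (m <= mu)%N && (mu <= l)%N && (l + mu <= n)%N)
      (Bd l mu + bad l mu) <= _); last first.
    rewrite big_split /=; apply: lerD => //.
    apply: filter_le => // mu /andP[/andP[]] //.
  apply: ler_sum => mu /andP[/andP[h1 h2] h3].
  rewrite /bad; case: ifP => hL.
    apply: ler_wpDl => //.
    rewrite -[X in _ <= X]mulr1; apply: ler_wpM2l => //.
    by rewrite exprn_ile1 // ltW.
  rewrite addr0.
  apply: (@term_bound _ q m n l mu) => //; first exact: ltW.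
  case: (eqVneq (nat_of_ord mu) m) => [->|hne]; [by left | right].
  apply: HT0; move: hL; rewrite /L; lia.
apply: le_trans step1 _.
have good : \sum_(l < n.+1) \sum_(mu < n.+1 | (m <= mu)%N) Bd l mu <= 2 * C * (1 + a) ^+ N.
  exact: (@sum_good _ a m n (ltW a0)).
have badb : \sum_(l < n.+1) \sum_(mu < n.+1 | (m <= mu)%N && (mu <= l)%N && (l + mu <= n)%N) bad l mu
     <= c * ((n.+1) ^ E)%:R.
  apply: le_trans (_ : \sum_(l < n.+1) \sum_(mu < n.+1) (((2 * n.+1) ^ (2 * L))%:R : R) <= _).
    apply: ler_sum => l _.
    apply: le_trans (_ : \sum_(mu < n.+1 | (m <= mu)%N && (mu <= l)%N && (l + mu <= n)%N)
        (((2 * n.+1) ^ (2 * L))%:R : R) <= _); last first.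
      by apply: filter_le.
    apply: ler_sum => mu /andP[/andP[h1 h2] h3].
    rewrite /bad; case: ifP => hL //.
    by rewrite ler_nat; apply: bad_bound.
  by rewrite count_bound.
apply: le_trans (lerD good (le_trans badb (HM1 n hnM1))) _.
have Y0 : 0 <= (1 + a) ^+ N by rewrite exprn_ge0 // addr_ge0 // ltW.
have C1 : 1 <= C by rewrite /C ler1n bin_gt0 ltnW.
have en : n = (N + m)%N by rewrite /N subnK // ltnW.
have W1 : 1 + a <= (1 + a) ^+ m.
  rewrite -[X in X <= _]expr1; apply: ler_weXn2l; first by rewrite lerDl ltW.
  lia.
have -> : (1 + a) ^+ n = (1 + a) ^+ N * (1 + a) ^+ m by rewrite -exprD -en.
set Y := (1 + a) ^+ N in Y0 *; set W := (1 + a) ^+ m in W1 *.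
have h1 : C * Y * (1 + a) <= C * Y * W by apply: ler_wpM2l => //; apply: mulr_ge0 => //; lra.
have h2 : a * Y <= C * (a * Y).
  by rewrite -[X in X <= _]mul1r; apply: ler_wpM2r => //; apply: mulr_ge0 => //; apply: ltW.
have -> : 2 * C * (Y * W) = 2 * (C * Y * W) by ring.
rewrite (_ : C * Y * (1 + a) = C * Y + C * (a * Y)) in h1; last by ring.
have h3 : 0 <= C * (a * Y) by apply: mulr_ge0; [lra | apply: mulr_ge0 => //; apply: ltW].
lra.
Qed.


Theorem mainTheorem5 (R : realType) :
  (forall (m : nat) (p : R), (2 <= m)%N -> 0 < p -> p < 2^-1 ->
     exists M : nat, forall n : nat, (M < n)%N -> lhs_sum p m n <= rhs_bound p m n)
  /\
  (forall (m : nat) (p : R), (2 <= m)%N -> 0 < p -> p < 100^-1 ->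
     forall n : nat, (2 * m <= n)%N -> lhs_sum p m n <= rhs_bound p m n).
Proof.
split.
- move=> m p; exact: part1.
- move=> m p; exact: part2.
Qed.
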